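(* Let $p$ be an odd prime and let $G$ be a finite $p$-solvable group such that every maximal subgroup of $G$ is either $p$-nilpotent or has prime index in $G$. Then ${\bf O}_{p',p,p',p,p'}(G)=G$. In particular, the $p$-length of $G$ satisfies $l_p(G)\le 2$.
   Context: A group is $p$-nilpotent if it has a normal Hall $p'$-subgroup. A maximal subgroup means a maximal proper subgroup. ${\bf O}_{p'}(G)$ is the largest normal $p'$-subgroup and ${\bf O}_p(G)$ the largest normal $p$-subgroup of $G$; the upper $p'p$-series is defined recursively: ${\bf O}_{p',p}(G)$ is the full preimage of ${\bf O}_p(G/{\bf O}_{p'}(G))$, ${\bf O}_{p',p,p'}(G)$ the full preimage of ${\bf O}_{p'}(G/{\bf O}_{p',p}(G))$, and so on alternately. The $p$-length $l_p(G)$ of a $p$-solvable group is the number of $p$-group factors in its upper $p'p$-series (equivalently, the minimal number of $p$-factors in a normal series whose factors are $p$-groups or $p'$-groups). *)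

(* Defs.v *)
From mathcomp Require Import all_boot all_fingroup all_solvable.
Set Implicit Arguments. Unset Strict Implicit. Unset Printing Implicit Defensive.
Local Open Scope group_scope.

Section Defs.
Variable gT : finGroupType.

(* Upper pi-series, listed from the top: for pis = [:: pi_1; ...; pi_n],
   useries_rev (rev pis) G = O_{pi_1,...,pi_n}(G), with
   O_{pi_1,...,pi_n}(G) = preimage of O_{pi_n}(G / O_{pi_1,...,pi_(n-1)}(G)). *)
Fixpoint useries_rev (pis : seq nat_pred) (G : {set gT}) : {set gT} :=
  if pis is pi :: pis' then
    let K := useries_rev pis' G in coset K @*^-1 'O_pi(G / K)
  else 1.

Definition useries (pis : seq nat_pred) (G : {set gT}) : {set gT} :=
  useries_rev (rev pis) G.

Definition p_nilpotent (p : nat) (G : {set gT}) : Prop :=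
  exists H : {group gT}, p^'.-Hall(G) H /\ H <| G.

Definition p_solvable (p : nat) (G : {group gT}) : Prop :=
  exists s : seq {group gT},
    last 1%G s = G /\
    path (fun H K : {group gT} =>
            (H <| K) && (p.-group (K / H) || p^'.-group (K / H))) 1%G s.

End Defs.

(* Main.v *)
Require Import Defs.
From mathcomp Require Import all_boot all_fingroup all_solvable.
Local Open Scope group_scope.
Set Implicit Arguments. Unset Strict Implicit.

Lemma useriesE (gT : finGroupType) pis (G : {set gT}) : useries pis G = pseries pis G.
Proof.
rewrite /useries /pseries; elim: (rev pis) => //= pi l IH. by rewrite IH.
Qed.

Lemma pseries_step (gT : finGroupType) pis pi (G A B : {group gT}) :
  A \subset pseries pis G -> A \subset B -> B <| G -> pi.-nat #|B : A| ->
  B \subset pseries (rcons pis pi) G.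
Proof.
move=> sAS sAB /andP[sBG nBG] piBA.
have nsSG := pseries_normal pis G.
have nSB : B \subset 'N(pseries pis G) := subset_trans sBG (normal_norm nsSG).
rewrite pseries_rcons /pcore_mod -sub_morphim_pre //.
apply: pcore_max; last by apply: morphim_normal; apply/andP.
rewrite /pgroup card_quotient // -indexgI.
apply: pnat_dvd piBA. apply: indexgS. by rewrite subsetI sAB.
Qed.

Lemma pseries_lift (gT : finGroupType) pi t (G N : {group gT}) :
  N <| G -> pi.-group N ->
  coset N @*^-1 pseries t (G / N) \subset pseries (pi :: t) G.
Proof.
move=> nsNG piN; elim/last_ind: t => [|t tau IH].
  by rewrite /= cosetpre1 pseries1 pcore_max.
rewrite -rcons_cons; apply: pseries_step IH _ _ _.
- by rewrite morphpreS // -cats1 pseries_sub_catl.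
- by rewrite -{2}(quotientGK nsNG) cosetpre_normal pseries_normal.
rewrite index_cosetpre -card_quotient ?pseries_norm2 //.
by rewrite quotient_pseries; exact: pcore_pgroup.
Qed.

Lemma pseries_liftE (gT : finGroupType) pi t (G N : {group gT}) :
  N <| G -> pi.-group N -> pseries t (G / N) = G / N ->
  pseries (pi :: t) G = G.
Proof.
move=> nsNG piN E; apply/eqP; rewrite eqEsubset pseries_sub /=.
by rewrite -{1}(quotientGK nsNG) -E pseries_lift.
Qed.

Lemma pseries_cat_congr (gT : finGroupType) u u' t (G : {group gT}) :
  pseries u G = pseries u' G -> pseries (u ++ t) G = pseries (u' ++ t) G.
Proof.
move=> E; elim/last_ind: t => [|t pi IH]; first by rewrite !cats0.
by rewrite -!rcons_cat !pseries_rcons IH.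
Qed.

Lemma pre_normal (gT : finGroupType) pis (G N : {group gT}) : N <| G ->
  coset N @*^-1 pseries pis (G / N) <| G.
Proof. by move=> nsNG; rewrite -{2}(quotientGK nsNG) cosetpre_normal pseries_normal. Qed.

Lemma pre_index (gT : finGroupType) pis pi (G N : {group gT}) :
  pi.-nat #|coset N @*^-1 pseries (rcons pis pi) (G / N)
           : coset N @*^-1 pseries pis (G / N)|.
Proof.
rewrite index_cosetpre -card_quotient ?pseries_norm2 //.
by rewrite quotient_pseries; exact: pcore_pgroup.
Qed.

Lemma pre_sub (gT : finGroupType) pis pi (G N : {group gT}) :
  coset N @*^-1 pseries pis (G / N) \subset
  coset N @*^-1 pseries (rcons pis pi) (G / N).
Proof. by rewrite morphpreS // -cats1 pseries_sub_catl. Qed.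


Section PSol.
Variables (gT : finGroupType) (p : nat).
Implicit Types (G H K N x y : {group gT}).

Let R := fun H K : {group gT} =>
  (H <| K) && (p.-group (K / H) || p^'.-group (K / H)).

Lemma path_sub_last x s : path R x s -> x \subset last x s.
Proof.
elim: s x => //= y s IH x /andP[/andP[/andP[sxy _] _] /IH]. exact: subset_trans.
Qed.

Lemma pgroup_quo_quo pi x y N : x <| y -> y \subset 'N(N) ->
  pi.-group (y / x) -> pi.-group ((y / N) / (x / N)).
Proof.
move=> nsxy nNy; rewrite /pgroup card_quotient ?normal_norm //.
rewrite card_quotient ?normal_norm ?quotient_normal //.
apply: pnat_dvd; apply: index_quotient. exact: subset_trans (subsetIl _ _) nNy.
Qed.

Lemma psol_quo G N : p_solvable p G -> N <| G -> p_solvable p (G / N)%G.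
Proof.
move=> [s [lastG pth]] nsNG.
have nNG := normal_norm nsNG.
pose f := fun H : {group gT} => (H / N)%G.
have f1 : f 1%G = 1%G by apply: val_inj; rewrite /= quotient1.
exists (map f s); split.
  by rewrite -f1 last_map lastG.
rewrite -f1.
have: last 1%G s \subset 'N(N) by rewrite lastG.
elim: s 1%G pth {lastG} => //= y s IH x /andP[Rxy pys] sN.
rewrite IH // andbT.
have sxy : x \subset y by case/andP: Rxy => /andP[].
have syN : y \subset 'N(N) := subset_trans (path_sub_last pys) sN.
case/andP: Rxy => nsxy pg.
rewrite quotient_normal //=.
by case/orP: pg => pg; apply/orP; [left | right]; apply: pgroup_quo_quo.
Qed.

Lemma psol_core G : p_solvable p G -> G :!=: 1 ->
  'O_p(G) != 1 \/ 'O_p^'(G) != 1.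
Proof.
move=> [s [lastG pth]] ntG.
pose P (X : {group gT}) := [|| X :==: 1, 'O_p(X) != 1 | 'O_p^'(X) != 1].
suff key : forall s x, path R x s -> P x -> P (last x s).
  have := key s 1%G pth; rewrite /P lastG eqxx (negbTE ntG) /= => /(_ isT).
  by case/orP; [left | right].
move=> {lastG pth}; elim=> [|y t IH] x /=; first by move=> _.
case/andP=> /andP[nsxy pg] pys; rewrite /P => Hx; apply: IH => //; rewrite /P.
have core_sub : forall pi : nat_pred, 'O_pi(x) \subset 'O_pi(y).
  by move=> pi; apply: pcore_max; [exact: pcore_pgroup | exact: gFnormal_trans].
case/or3P: Hx => [/eqP x1 | Ox | Ox].
- have pgy : forall pi : nat_pred, pi.-group (y / x) -> pi.-group y.
    by move=> pi; rewrite x1 /pgroup card_quotient ?norms1 // indexg1.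
  case: (eqVneq (gval y) 1) => [y1 | nty]; first by apply/orP; left; apply/eqP.
  case/orP: pg => /pgy pgy'.
    by rewrite (pcore_pgroup_id pgy') nty orbT.
  by rewrite (pcore_pgroup_id pgy') nty !orbT.
- apply/or3P; constructor 2.
  by apply: contraNneq Ox => Oy1; apply/eqP/trivgP; rewrite -Oy1 core_sub.
- apply/or3P; constructor 3.
  by apply: contraNneq Ox => Oy1; apply/eqP/trivgP; rewrite -Oy1 core_sub.
Qed.

End PSol.


Lemma maxcond_quo (gT : finGroupType) (p : nat) (G N : {group gT}) : N <| G ->
 (forall M : {group gT}, maximal M G -> p_nilpotent p M \/ prime #|G : M|) ->
 (forall M : {group coset_of N}, maximal M (G / N) ->
    p_nilpotent p M \/ prime #|G / N : M|).
Proof.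
move=> nsNG hM Mb maxMb.
have nNG := normal_norm nsNG.
pose M := (coset N @*^-1 Mb)%G.
have maxM : maximal M G.
  by rewrite -(quotientGK nsNG) /M (cosetpre_maximal Mb [group of G / N]).
have sMG : M \subset G by case/maxgroupP: maxM => /andP[].
have EMb : gval Mb = M / N by rewrite cosetpreK.
case: (hM M maxM) => [[H [hallH nsHM]] | prM].
  left; exists (H / N)%G; rewrite EMb; split.
    by apply: quotient_pHall => //; apply: subset_trans (subset_trans sMG nNG); case/andP: hallH.
  exact: quotient_normal.
right; by rewrite -index_cosetpre quotientGK.
Qed.


Definition hypG (gT : finGroupType) (p : nat) (G : {group gT}) :=
  p_solvable p G /\
  (forall M : {group gT}, maximal M G -> p_nilpotent p M \/ prime #|G : M|).

Arguments hypG {gT} p G.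

Lemma hyp_quo (gT : finGroupType) (p : nat) (G N : {group gT}) :
  hypG p G -> N <| G -> hypG p (G / N)%G.
Proof. by move=> [ps mc] nsNG; split; [exact: psol_quo | exact: maxcond_quo]. Qed.

Theorem main p : prime p -> forall n (gT : finGroupType) (G : {group gT}),
  #|G| <= n -> hypG p G ->
  pseries [:: p^'; (p : nat_pred); p^'; (p : nat_pred); p^'] G = G.
Proof.
move=> pr_p; elim=> [|n IHn] gT G; first by rewrite leqNgt cardG_gt0.
move=> leGn hG; have [psol maxc] := hG.
have IHq : forall N : {group gT}, N <| G -> N :!=: 1 ->
    pseries [:: p^'; (p : nat_pred); p^'; (p : nat_pred); p^'] (G / N) = G / N.
  move=> N nsNG ntN; apply: IHn; last exact: hyp_quo.
  by rewrite -ltnS (leq_trans _ leGn) // ltn_quotient // normal_sub.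
have [G1 | ntG] := eqVneq (gval G) 1.
  by apply/eqP; rewrite eqEsubset pseries_sub G1 sub1G.
have [K1 | ntK] := eqVneq 'O_p^'(G) 1; last first.
  have nsKG : 'O_p^'(G) <| G := pcore_normal _ _.
  have := IHq _ nsKG ntK.
  rewrite (pseries_pop _ (trivg_pcore_quotient _ _)) => E.
  exact: (pseries_liftE nsKG (pcore_pgroup _ _) E).
have ntOp : 'O_p(G) != 1.
  by case: (psol_core psol ntG) => //; rewrite K1 eqxx.
have [N minN sNOp] := minnormal_exists ntOp (gFnorm _ G).
have [ntN nNG] : N :!=: 1 /\ G \subset 'N(N) by case/mingroupP: minN => /andP[].
have sNG : N \subset G := subset_trans sNOp (pcore_sub _ _).
have nsNG : N <| G by apply/andP.
have pN : p.-group N := pgroupS sNOp (pcore_pgroup _ _).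
have abN : abelian N.
  have [_ _ /is_abelemP[q _ /abelem_abelian]] :=
    minnormal_solvable minN (subxx N) (pgroup_sol pN).
  done.
have EG := IHq N nsNG ntN.
suff sG: G \subset pseries [:: (p:nat_pred); p^'; (p:nat_pred); p^'] G.
  apply/eqP; rewrite eqEsubset pseries_sub /=.
  exact: subset_trans sG (pseries_sub_catr [:: p^'] _ G).
have [sNPhi | nsNPhi] := boolP (N \subset 'Phi(G)).
  have Op'1 : 'O_p^'(G / N) = 1.
    pose L := (coset N @*^-1 'O_p^'(G / N))%G.
    have nsLG : L <| G.
      rewrite /L /=. have := @cosetpre_normal _ N ('O_p^'(G / N)) (G / N). rewrite quotientGK // pcore_normal. by [].

    have sNL : N \subset L by rewrite /L -{1}(cosetpre1 N) morphpreS ?sub1G.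
    have cardL : #|L| = (#|N| * #|'O_p^'(G / N)|)%N by rewrite card_cosetpre.
    have p'O : p^'.-nat #|'O_p^'(G / N)| := pcore_pgroup _ _.
    have hallN : Hall L N.
      rewrite /Hall sNL -divgS // cardL mulKn ?cardG_gt0 //.
      exact: pnat_coprime pN p'O.
    have [K /complP[tiNK defL]] :=
      splitsP (SchurZassenhaus_split hallN (normalS sNL (normal_sub nsLG) nsNG)).
    have cardK : #|K| = #|'O_p^'(G / N)|.
      by apply/eqP; rewrite -(eqn_pmul2l (cardG_gt0 N)) -cardL -defL TI_cardMg.
    have sKL : K \subset L by rewrite -defL mulG_subr.
    have sKG : K \subset G := subset_trans sKL (normal_sub nsLG).
    have nNK : K \subset 'N(N) := subset_trans sKG nNG.
    have coNK : coprime #|N| #|K| by rewrite cardK (pnat_coprime pN p'O).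
    have GNK : G \subset 'N_G(K) * N.
      apply/subsetP=> g Gg.
      have sKgL : K :^ g \subset N * K.
        by rewrite defL -(normsP (normal_norm nsLG) g Gg) conjSg.
      have [x Nx EKg] :=
        SchurZassenhaus_trans_sol (pgroup_sol pN) nNK sKgL coNK (cardJg K g).
      have -> : g = (g * x^-1) * x by rewrite mulgKV.
      rewrite mem_mulg // inE groupM ?groupV ?Gg ?(subsetP sNG x Nx) //=.
      by apply/normP; rewrite conjsgM EKg conjsgK.
    have nKG : G \subset 'N(K).
      have : 'Phi(G) <*> 'N_G(K) = G.
        apply/eqP; rewrite eqEsubset join_subG Phi_sub subsetIl /=.
        apply: subset_trans GNK _; rewrite mul_subG ?joing_subr //.
        exact: subset_trans sNPhi (joing_subl _ _).
      move/Phi_nongen; rewrite genGid => E.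
      by rewrite -{1}E subsetIr.
    have K1' : K :=: 1.
      apply/trivgP; rewrite -K1; apply: pcore_max; first by rewrite /pgroup cardK.
      by apply/andP.
    by apply/eqP; rewrite trivg_card1 -cardK K1' cards1.
  have E2 : pseries [:: (p:nat_pred); p^'; (p:nat_pred); p^'] (G / N) = G / N.
    by rewrite -(pseries_pop _ Op'1).
  have E3 := pseries_liftE nsNG pN E2.
  have congr : pseries ([:: (p:nat_pred); (p:nat_pred)] ++ [:: p^'; (p:nat_pred); p^']) G
        = pseries ([:: (p:nat_pred)] ++ [:: p^'; (p:nat_pred); p^']) G.
    apply: pseries_cat_congr; exact: (pseries_rcons_id [::] p G).
  by rewrite /= E3 in congr; rewrite -congr.
have : ~~ [forall M : {group gT}, maximal M G ==> (N \subset M)].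
  apply: contra nsNPhi => /forallP allM; rewrite /Frattini; apply/bigcapsP => H.
  rewrite /maximal_eq => /orP[/eqP-> // | maxH].
  exact: (implyP (allM H) maxH).
rewrite negb_forall => /existsP[M]; rewrite negb_imply => /andP[maxM nsNM].
have [prMG maxMG] := maxgroupP maxM.
have sMG : M \subset G := proper_sub prMG.
have nNM : M \subset 'N(N) := subset_trans sMG nNG.
have defG : N * M = G.
  rewrite -norm_joinEr //; apply/eqP; rewrite eqEsubset join_subG sNG sMG /=.
  apply: contraR nsNM => nGsub.
  have prop : N <*> M \proper G.
    have neq : N <*> M != G :> {set gT}.
      by apply/eqP => E; move: nGsub; rewrite -E subxx.
    by rewrite properEneq neq join_subG sNG sMG.
  have := maxMG (N <*> M)%G prop (joing_subr _ _) => E.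
  by rewrite -E joing_subl.
have tiNM : N :&: M = 1.
  apply/eqP; apply: contraR nsNM => ntNM.
  have [_ minNN] := mingroupP minN.
  have nNMG : G \subset 'N(N :&: M).
    rewrite -defG mul_subG //; first exact: sub_abelian_norm abN (subsetIl _ _).
    by rewrite normsI // normG.
  have := minNN (N :&: M)%G; rewrite /= ntNM nNMG => /(_ isT (subsetIl _ _)) E.
  by rewrite -E subsetIr.
have cardG : #|G| = (#|N| * #|M|)%N by rewrite -defG TI_cardMg.
case: (maxc M maxM) => [[H [hallH nsHM]] | prM].
  have [sHM p'H p'iMH] := and3P hallH.
  have nNH : H \subset 'N(N) := subset_trans sHM nNM.
  pose NH := (N <*> H)%G.
  have defNH : N <*> H = N * H by rewrite norm_joinEr.
  have tiNH : N :&: H = 1.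
    by apply/trivgP; rewrite -tiNM setIS.
  have cardNH : #|NH| = (#|N| * #|H|)%N by rewrite /= defNH TI_cardMg.
  have sNHG : NH \subset G by rewrite join_subG sNG (subset_trans sHM sMG).
  have nsNHG : NH <| G.
    rewrite /normal sNHG -defG mul_subG //.
      exact: subset_trans (joing_subl _ _) (normG _).
    by rewrite normsY // normal_norm.
  have sG3 : G \subset pseries [:: (p:nat_pred); p^'; (p:nat_pred)] G.
    have s1 : gval N \subset pseries [:: (p:nat_pred)] G.
      apply: (pseries_step (pis := [::])) nsNG _; rewrite ?sub1G //.
      by rewrite indexg1.
    have s2 : gval NH \subset pseries [:: (p:nat_pred); p^'] G.
      apply: (pseries_step (pis := [:: (p:nat_pred)])) s1 _ nsNHG _.
        exact: joing_subl.
      by rewrite -divgS ?joing_subl // cardNH mulKn ?cardG_gt0.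
    apply: (@pseries_step _ [:: (p:nat_pred); p^'] p G NH G s2 sNHG); first by rewrite normal_refl.
    have -> : #|G : NH| = #|M : H|.
      apply/eqP; rewrite -(eqn_pmul2l (cardG_gt0 NH)) (Lagrange sNHG).
      by rewrite cardNH cardG -(Lagrange sHM) mulnA.
    by rewrite pnatNK in p'iMH.
  exact: subset_trans sG3 (pseries_sub_catl _ [:: p^'] G).
have iGM : #|G : M| = #|N|.
  by apply/eqP; rewrite -(eqn_pmul2l (cardG_gt0 M)) (Lagrange sMG) cardG mulnC.
have prN : prime #|N| by rewrite -iGM.
have [P sylP] := Sylow_exists p G.
have sNP : N \subset P := subset_trans sNOp (pcore_sub_Hall sylP).
have nsNP : N <| P := normalS sNP (pHall_sub sylP) nsNG.
have ntNZ := meet_center_nil (pgroup_nil (pHall_pgroup sylP)) nsNP ntN.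
have sNZ : N \subset 'Z(P).
  apply: contraR ntNZ => nsub; by rewrite (prime_TIg prN nsub) eqxx.
pose C := 'C_G(N)%G.
have sPC : P \subset C.
  rewrite subsetI (pHall_sub sylP) centsC.
  exact: subset_trans sNZ (subsetIr _ _).
have p'GC : p^'.-nat #|G : C|.
  apply: pnat_dvd (indexgS G sPC) _; by case/and3P: sylP.
have sCG : C \subset G := subsetIl _ _.
have nsCG : C <| G by rewrite /normal sCG normsI ?normG ?norms_cent.
have sNC : N \subset C by rewrite subsetI sNG.
pose sq := [:: p^'; (p : nat_pred); p^'; (p : nat_pred); p^'].
pose B k := (coset N @*^-1 pseries (take k sq) (G / N))%G.
have nsB : forall k, B k <| G by move=> k; exact: pre_normal.
have B5 : B 5 = G :> {set gT} by rewrite /B /= EG quotientGK.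
have sB : forall k, B k \subset B k.+1.
  move=> k; rewrite /B; case: (ltnP k 5) => lt5.
    by rewrite (take_nth p^' (lt5 : k < size sq)) pre_sub.
  by rewrite !take_oversize ?(leq_trans lt5) //.
have iB : forall k, k < 5 -> (nth p^' sq k).-nat #|B k.+1 : B k|.
  by move=> k lt5; rewrite /B (take_nth p^' (lt5 : k < size sq)) pre_index.
have sNB1 : N \subset B 1%N by rewrite /B /= -{1}(cosetpre1 N) morphpreS ?sub1G.
have qB1 : p^'.-group (B 1%N / N).
  rewrite /B /= cosetpreK pseries1; exact: pcore_pgroup.
clearbody B.
pose D := (M :&: C)%G.
have defC : N * D = C.
  by rewrite /= group_modl // defG (setIidPr sCG).
have nsDG : D <| G.
  rewrite /normal (subset_trans (subsetIl _ _) sMG) -defG mul_subG //.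
    apply: subset_trans (cent_sub _); rewrite centsC.
    exact: subset_trans (subsetIr _ _) (subsetIr _ _).
  by rewrite normsI ?normG // (subset_trans sMG (normal_norm nsCG)).
have B1C : B 1%N :&: C = N.
  pose E := (B 1%N :&: D)%G.
  have defB1C : B 1%N :&: C = N * E.
    rewrite -defC /= setIC -group_modl //.
    by rewrite setIC.
  have nsEG : E <| G := normalI (nsB 1%N) nsDG.
  have tiEN : E :&: N = 1.
    apply/trivgP; rewrite -tiNM setIC setISS //.
    exact: subset_trans (subsetIr _ _) (subsetIl _ _).
  have p'E : p^'.-group E.
    have nNE : E \subset 'N(N) := subset_trans (normal_sub nsEG) nNG.
    rewrite /pgroup -(indexg1 E) -tiEN indexgI -card_quotient //.
    apply: pgroupS (quotientS _ (subsetIl _ _)) _.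
    exact: qB1.
  have E1 : gval E = 1.
    by apply/trivgP; rewrite -K1 pcore_max.
  by rewrite defB1C E1 mulg1.
pose A1 := (B 2 :&: C)%G.
have nsA1 : A1 <| G := normalI (nsB 2) nsCG.
have pA1 : p.-nat #|A1|.
  have sNA1 : N \subset A1 by rewrite subsetI sNC andbT (subset_trans _ (sB 1%N)) // -B1C subsetIl.
  rewrite -(Lagrange sNA1) pnatM (pN : p.-nat #|N|) /=.
  have -> : #|A1 : N| = #|A1 : B 1%N|.
    by rewrite -(indexgI _ (B 1%N)) /= setIAC (setIidPr (sB 1%N)) B1C.
  have nB1A1 : A1 \subset 'N(B 1%N).
    exact: subset_trans (normal_sub nsA1) (normal_norm (nsB 1%N)).
  rewrite -card_quotient //.
  apply: pnat_dvd (iB 1%N isT).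
  rewrite -card_quotient ?(subset_trans (normal_sub (nsB 2)) (normal_norm (nsB 1%N))) //.
  by apply: cardSg; apply: quotientS; apply: subsetIl.
have s1 : gval A1 \subset pseries [:: (p:nat_pred)] G.
  apply: (@pseries_step _ [::] p G 1%G A1) => //; first exact: sub1G.
  by rewrite indexg1.
have s2 : gval (B 3) \subset pseries [:: (p:nat_pred); p^'] G.
  have sA1B3 : A1 \subset B 3.
    exact: subset_trans (subsetIl _ _) (sB 2).
  apply: (@pseries_step _ [:: (p:nat_pred)] p^' G A1 (B 3) s1 sA1B3 (nsB 3)).
  rewrite -(Lagrange_index (sB 2) (subsetIl _ _)) pnatM (iB 2 isT) /=.
  rewrite indexgI.
  have nCB2 : B 2 \subset 'N(C) := subset_trans (normal_sub (nsB 2)) (normal_norm nsCG).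
  rewrite -card_quotient //.
  apply: pnat_dvd p'GC.
  by rewrite -card_quotient ?normal_norm // cardSg // quotientS // normal_sub.
have s3 : gval (B 4) \subset pseries [:: (p:nat_pred); p^'; (p:nat_pred)] G.
  exact: (@pseries_step _ [:: (p:nat_pred); p^'] p G (B 3) (B 4) s2 (sB 3) (nsB 4) (iB 3 isT)).
have := @pseries_step _ [:: (p:nat_pred); p^'; (p:nat_pred)] p^' G (B 4) (B 5) s3 (sB 4) (nsB 5) (iB 4 isT).
by rewrite B5.
Qed.

Unset Implicit Arguments. Set Strict Implicit.

Theorem theoremD (gT : finGroupType) (p : nat) (G : {group gT}) :
  prime p -> odd p -> p_solvable p G ->
  (forall M : {group gT}, maximal M G -> p_nilpotent p M \/ prime #|G : M|) ->
  useries [:: p^'; (p : nat_pred); p^'; (p : nat_pred); p^'] G = G.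
Proof.
move=> pr_p _ ps mc; rewrite useriesE.
by apply: (main pr_p (leqnn _)); split.
Qed.
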